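(* Let $n\ge2$ and let $c_1,c_2\ge 0$ satisfy $c_1-3c_2-3\ge0$, $c_2+1\ge 2n$ and $c_1\ge 3c_2+3+(c_2+1)^2$. Let $\mathcal{A}=(a_{i_1i_2i_3})$ be the third order $n$-dimensional tensor with $a_{i_1i_2i_3}=c_1$ if $i_1=i_2=i_3$; $a_{i_1i_2i_3}=c_2$ if not all indices are equal but at least two of them are equal; and $a_{i_1i_2i_3}=-1$ if $i_1,i_2,i_3$ are pairwise distinct. Then $\mathcal{A}$ is a strongly SOS tensor. In particular (when $n\ge3$, so that $\mathcal{A}$ has entries equal to $-1$), a strongly SOS tensor may have negative entries.
   Context: For a symmetric third order $n$-dimensional tensor $\mathcal{A}$ and $\mathbf{x}\in\mathbb{R}^n$, let $F_i(\mathbf{x})=\sum_{i_2,i_3=1}^n a_{ii_2i_3}x_{i_2}x_{i_3}$. $\mathcal{A}$ is a strongly SOS tensor if each $F_i$, $i=1,\dots,n$, is a sum of squares of real polynomials. *)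

(* Defs.v *)
From HB Require Import structures.
From mathcomp Require Import all_boot all_order all_algebra.
From mathcomp Require Import reals.
From mathcomp Require Import mpoly.
Set Implicit Arguments. Unset Strict Implicit. Unset Printing Implicit Defensive.
Import Order.TTheory GRing.Theory Num.Theory.
Local Open Scope ring_scope.

Definition tensor3 (R : realType) (n : nat) := 'I_n -> 'I_n -> 'I_n -> R.

Definition symmetric3 (R : realType) (n : nat) (A : tensor3 R n) : Prop :=
  forall i j k : 'I_n, A i j k = A j i k /\ A i j k = A i k j.

Definition Fpoly (R : realType) (n : nat) (A : tensor3 R n) (i : 'I_n)
  : {mpoly R[n]} :=
  \sum_(j < n) \sum_(k < n) A i j k *: ('X_j * 'X_k).

Definition is_sos (R : realType) (n : nat) (p : {mpoly R[n]}) : Prop :=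
  exists s : seq {mpoly R[n]}, p = \sum_(q <- s) q ^+ 2.

Definition strongly_SOS (R : realType) (n : nat) (A : tensor3 R n) : Prop :=
  symmetric3 A /\ forall i : 'I_n, is_sos (Fpoly A i).

Definition cor_tensor (R : realType) (n : nat) (c1 c2 : R) : tensor3 R n :=
  fun i j k =>
    if (i == j) && (j == k) then c1
    else if (i != j) && (j != k) && (i != k) then -1
    else c2.

(* Main.v *)
Require Import Defs.
From HB Require Import structures.
From mathcomp Require Import all_boot all_order all_algebra.
From mathcomp Require Import reals.
From mathcomp Require Import mpoly.
From mathcomp Require Import ring lra.
Import Order.TTheory GRing.Theory Num.Theory.
Local Open Scope ring_scope.

Section S.
Variables (R : realType) (n : nat).
Local Notation P := {mpoly R[n]}.

Lemma sos_sq (q : P) : is_sos (q ^+ 2).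
Proof. by exists [:: q]; rewrite big_seq1. Qed.

Lemma sos0 : is_sos (0 : P).
Proof. by exists [::]; rewrite big_nil. Qed.

Lemma sosD (p q : P) : is_sos p -> is_sos q -> is_sos (p + q).
Proof. by move=> [s ->] [t ->]; exists (s ++ t); rewrite big_cat. Qed.

Lemma sosZ (w : R) (p : P) : 0 <= w -> is_sos p -> is_sos (w%:MP * p).
Proof.
move=> w0 [s ->]; exists [seq (Num.sqrt w)%:MP * q | q <- s].
rewrite big_map mulr_sumr; apply: eq_bigr => q _.
by rewrite exprMn -rmorphXn /= sqr_sqrtr.
Qed.

Lemma sos_sum (I : finType) (F : I -> P) : (forall j, is_sos (F j)) -> is_sos (\sum_j F j).
Proof. move=> H; apply: (big_ind (@is_sos R n)) => //; [exact: sos0 | exact: sosD]. Qed.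
Variable i : 'I_n.
Definition Y (j : 'I_n) : P := if j == i then 0 else 'X_j.
Definition D (j : 'I_n) : P := if j == i then 'X_i else 0.

Lemma XYD j : 'X_j = Y j + D j :> P.
Proof. by rewrite /Y /D; case: eqVneq => [->|]; rewrite ?add0r ?addr0. Qed.

Lemma sumD : \sum_j D j = 'X_i.
Proof.
rewrite (bigD1 i) //= big1 ?addr0; first by rewrite /D eqxx.
by move=> j /negbTE ji; rewrite /D ji.
Qed.

Lemma sum_delta (f : 'I_n -> P) j : \sum_k (j == k)%:R * f k = f j.
Proof.
rewrite (bigD1 j) //= eqxx mul1r big1 ?addr0 // => k kj.
by rewrite eq_sym (negbTE kj) mul0r.
Qed.

Lemma dsum (f g : 'I_n -> P) : \sum_j \sum_k f j * g k = (\sum_j f j) * (\sum_k g k).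
Proof. by rewrite mulr_suml; apply: eq_bigr => j _; rewrite mulr_sumr. Qed.

Local Notation S := (\sum_j Y j).
Local Notation Q := (\sum_j Y j ^+ 2).

Lemma step1 (c1 c2 : R) :
  Fpoly (@cor_tensor R n c1 c2) i =
  c1%:MP * 'X_i ^+ 2 + 2 * c2%:MP * 'X_i * S + (c2%:MP + 1) * Q - S ^+ 2.
Proof.
rewrite /Fpoly.
transitivity (\sum_(j < n) \sum_(k < n)
  (c1%:MP * (D j * D k) + c2%:MP * (D j * Y k) + c2%:MP * (Y j * D k)
   + (c2%:MP + 1) * ((j == k)%:R * (Y j * Y k)) - Y j * Y k)).
  apply: eq_bigr => j _; apply: eq_bigr => k _.
  rewrite -mul_mpolyC (XYD j) (XYD k) /cor_tensor /Y /D.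
  case: (eqVneq j i) => [jE|ji]; case: (eqVneq k i) => [kE|ki]; rewrite ?jE ?kE.
  - rewrite !eqxx /=; ring.
  - by rewrite [i == k]eq_sym (negbTE ki) /=; ring.
  - by rewrite (negbTE ji) /=; ring.
  - case: (eqVneq j k) => [jk|jk] /=.
      by rewrite ?jk ?eqxx /=; ring.
    by rewrite /= rmorphN1; ring.
under eq_bigr => j _ do rewrite sumrB !big_split /= -!mulr_sumr sum_delta.
rewrite sumrB !big_split /= -!mulr_sumr -!mulr_suml sumD.
have -> : \sum_(j < n) Y j * Y j = Q by apply: eq_bigr => j _; rewrite expr2.
ring.
Qed.

Lemma sumsq_diff : \sum_j \sum_k (Y j - Y k) ^+ 2 = (n%:R * Q - S ^+ 2) *+ 2.
Proof.
transitivity (\sum_j \sum_k (Y j ^+ 2 * 1 + 1 * Y k ^+ 2 - 2 * (Y j * Y k))).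
  by apply: eq_bigr => j _; apply: eq_bigr => k _; ring.
under eq_bigr => j _ do rewrite sumrB big_split /= -!mulr_sumr.
rewrite sumrB big_split /= -!mulr_sumr -!mulr_suml.
rewrite !sumr_const !card_ord.
move: Q S => q s; ring.
Qed.

Lemma sumsq_shift (t : P) : \sum_j (Y j + t * 'X_i) ^+ 2 = Q + 2 * t * 'X_i * S + n%:R * t ^+ 2 * 'X_i ^+ 2.
Proof.
transitivity (\sum_j (Y j ^+ 2 + (2 * t * 'X_i) * Y j + (t ^+ 2 * 'X_i ^+ 2))).
  by apply: eq_bigr => j _; ring.
rewrite !big_split /= -mulr_sumr sumr_const card_ord -mulr_natl.
move: Q S => q s; ring.
Qed.

Lemma step2 (c1 c2 e t r h : R) :
  e + n%:R = c2 + 1 -> e * t = c2 -> n%:R * e * t ^+ 2 + r = c1 -> h * 2 = 1 ->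
  c1%:MP * 'X_i ^+ 2 + 2 * c2%:MP * 'X_i * S + (c2%:MP + 1) * Q - S ^+ 2 =
  h%:MP * (\sum_j \sum_k (Y j - Y k) ^+ 2) + e%:MP * (\sum_j (Y j + t%:MP * 'X_i) ^+ 2)
  + r%:MP * 'X_i ^+ 2.
Proof.
move=> h1 h2 h3 h4.
have H1 : e%:MP + n%:R = c2%:MP + 1 :> P by rewrite -mpolyC_nat -rmorphD h1 rmorphD.
have H2 : e%:MP * t%:MP = c2%:MP :> P by rewrite -rmorphM h2.
have H3 : n%:R * e%:MP * t%:MP ^+ 2 + r%:MP = c1%:MP :> P
  by rewrite -mpolyC_nat -rmorphXn -!rmorphM -rmorphD h3.
have H4 : h%:MP + h%:MP = 1 :> P.
  have hh : h + h = 1 by rewrite -h4 mulr_natr mulr2n.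
  by rewrite -rmorphD hh rmorph1.
rewrite sumsq_diff sumsq_shift -H1 -H2 -H3.
have -> : h%:MP * ((n%:R * Q - S ^+ 2) *+ 2) = (h%:MP + h%:MP) * (n%:R * Q - S ^+ 2) :> P by move: Q S => q s; ring.
rewrite H4; move: Q S => q s; ring.
Qed.
End S.

Lemma sym_cor (R : realType) (n : nat) (c1 c2 : R) : symmetric3 (@cor_tensor R n c1 c2).
Proof.
move=> i j k; rewrite /cor_tensor.
rewrite ?[j == i]eq_sym ?[k == i]eq_sym ?[k == j]eq_sym.
case: (eqVneq i j) => [?|ij]; first (subst j; case: (eqVneq i k) => [?|ik]; first (subst k; by rewrite ?eqxx)).
  by rewrite ?eqxx ?(negbTE ik) /=.
case: (eqVneq i k) => [?|ik]; first (subst k; by rewrite ?eqxx ?(negbTE ij) ?[j == i]eq_sym ?(negbTE ij) /= ?andbF).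
case: (eqVneq j k) => [?|jk]; first (subst k; by rewrite ?eqxx ?(negbTE ij) /= ?andbF).
by rewrite ?(negbTE ij) ?(negbTE ik) ?(negbTE jk).
Qed.

Theorem corollary4p3 (R : realType) (n : nat) (c1 c2 : R) :
  (2 <= n)%N -> 0 <= c1 -> 0 <= c2 ->
  0 <= c1 - 3 * c2 - 3 ->
  c2 + 1 >= 2 * n%:R ->
  c1 >= 3 * c2 + 3 + (c2 + 1) ^+ 2 ->
  strongly_SOS (@cor_tensor R n c1 c2) /\
  ((3 <= n)%N -> exists i j k : 'I_n, @cor_tensor R n c1 c2 i j k < 0).
Proof.
move=> n2 c10 c20 _ hc2 hc1.
split; last first.
  move=> n3.
  have h0 : (0 < n)%N by apply: leq_trans n3.
  have h1 : (1 < n)%N by apply: leq_trans n3.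
  have h2 : (2 < n)%N by [].
  exists (Ordinal h0), (Ordinal h1), (Ordinal h2).
  by rewrite /cor_tensor /= ltrN10.
split; first exact: sym_cor.
move=> i.
have nge2 : 2 <= n%:R :> R by rewrite (ler_nat R 2 n).
set e : R := c2 + 1 - n%:R.
have en : n%:R <= e by rewrite /e; lra.
have e0 : 0 < e by rewrite /e; lra.
set t : R := c2 / e.
have et : e * t = c2 by rewrite /t mulrC divfK // gt_eqF.
set r : R := c1 - n%:R * e * t ^+ 2.
have r0 : 0 <= r.
  rewrite /r subr_ge0.
  have A : 0 <= (e - n%:R) * (e * t ^+ 2).
    by apply: mulr_ge0; [lra | apply: mulr_ge0; [lra | exact: sqr_ge0]].
  have B : e * e * t ^+ 2 = c2 ^+ 2 by rewrite -et; ring.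
  nra.
rewrite (@step1 R n i c1 c2) (@step2 R n i c1 c2 e t r 2^-1); first last.
- by rewrite mulVf // pnatr_eq0.
- by rewrite /r; ring.
- exact: et.
- by rewrite /e; ring.
apply: sosD; [apply: sosD|]; apply: sosZ => //.
- by rewrite invr_ge0; lra.
- by apply: sos_sum => j; apply: sos_sum => k; exact: sos_sq.
- by lra.
- by apply: sos_sum => j; exact: sos_sq.
- exact: sos_sq.
Qed.
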